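(* Fix $k\ge0$, $D\geq2$, and let $s^j:=(1-\frac jD)s_k+\frac jDs_{k+1}$, $j=0,\dots,D$, with $s^j\in\mathcal{S}$. Let $w^\ast(s^0)=w^\ast_k$ and, for $j=1,\dots,D$, let $w^\ast(s^j)$ be KKT points of $(P_{s^j})$ with $w^\ast(s^D)=w^\ast_{k+1}$. Let $\bar w_{k+1}$ be produced from $\bar w_k=(\bar z_k,\bar\mu_k)$ by the homotopy scheme: set $z:=\bar z_k$, $\mu:=\bar\mu_k$; for $j=1,\dots,D$: replace $z$ by the result of $M$ successive primal sweeps on $L_\rho(\cdot,\mu,s^j)$ started at $z$, then set $\mu:=\mu+\rho G(z,s^j)$; finally $\bar w_{k+1}:=(z,\mu)$. Assume that the standing hypotheses (A), (B), (C) hold for the parameter sequence $(s^j)_{j=0}^D$, the KKT points $(w^\ast(s^j))_{j=0}^D$ and the intermediate iterates $\bar w^j$ (the values of $(z,\mu)$ after step $j$, $\bar w^0=\bar w_k$), with the same constants. Assume $\beta_w(\rho,M)<1$, $\beta_s(\rho,M)<1$, let $r_w,r_s>0$ satisfy $r_w<q_B\rho$, $\delta-(1+\frac{\lambda_H\lambda_B}{\rho})r_w>0$, $r_s<\frac{(1-\beta_w(\rho,M))r_w}{\beta_s(\rho,M)}$ and $\lambda_H\lambda_Br_s<\delta-(1+\frac{\lambda_H\lambda_B}{\rho})r_w$. If $\|\bar w_k-w^\ast_k\|_2<r_w$, $\|s_{k+1}-s_k\|_2\le r_s$ and $\|s_{k+1}-s_k\|_2<\min\{r_A,r_B,\frac{q_B\rho}{\lambda_A\lambda_F}\}$,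 then $$\|\bar w_{k+1}-w^\ast_{k+1}\|_2\leq\beta_w(\rho,M)^D\|\bar w_k-w^\ast_k\|_2+\beta_s(\rho,M)\frac{\sum_{i=0}^{D-1}\beta_w(\rho,M)^i}{D}\|s_{k+1}-s_k\|_2.$$
   Context: Problem data: $z=(z_1,\dots,z_P)\in\mathbb{R}^{n_z}$; $\mathcal{Z}=\mathcal{Z}_1\times\cdots\times\mathcal{Z}_P$ a product of nonempty bounded boxes; $J(z)=\sum_iJ_i(z_i)$ with polynomials $J_i$; polynomial maps $Q_c:\mathbb{R}^{n_z}\to\mathbb{R}^m$, $g_i:\mathbb{R}^{n_i}\to\mathbb{R}^{q_i}$; $T_i\in\mathbb{R}^{q_i\times p}$; $q=\sum q_i$; $\mathcal{S}\subseteq\mathbb{R}^p$; $G(z,s)=(Q_c(z),g_1(z_1)+T_1s,\dots,g_P(z_P)+T_Ps)$; $L_\rho(z,\mu,s)=J(z)+(\mu+\frac\rho2G(z,s))^\top G(z,s)$; for $w=(z,\mu)$, $F(w,s)=(\nabla J(z)+\nabla_zG(z,s)^\top\mu,\ G(z,s))$; $\mathcal{N}:=\mathcal{N}_{\mathcal{Z}\times\mathbb{R}^{m+q}}$. A KKT point of $(P_s)$: $\min J(z)$ s.t. $G(z,s)=0$, $z\in\mathcal{Z}$, is $w$ with $0\in F(w,s)+\mathcal{N}(w)$. For a reference multiplier $\tilde\mu$: $H^{\tilde\mu}_\rho(w,d,s):=(\nabla J(z)+\nabla_zG(z,s)^\top\mu,\ G(z,s)+d+(\tilde\mu-\mu)/\rho)$.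 Constants: $\lambda_F:=P\max_i\|T_i\|_2$; $\lambda_H>0$ with $\|H^{\tilde\mu}_\rho(w,d,s)-H^{\tilde\mu}_\rho(w,d',s')\|\le\lambda_H\|(d,s)-(d',s')\|$ for all arguments; $\lambda_G>0$ a Lipschitz constant of $z\mapsto G(z,s)$ on $\mathcal{Z}$ (independent of $s$). Primal sweep on $L_\rho(\cdot,\mu,s)$: block-coordinate projected-gradient pass over $i=1,\dots,P$ in order, each block update $z_i\leftarrow\pi_{\mathcal{Z}_i}(z_i-\frac1{c_i}\nabla_{z_i}L_\rho)$ (gradient evaluated with already updated preceding blocks) with curvature $c_i$ obtained by backtracking (multiply by $\beta>1$ from an initial $c_i^0>0$) until $f(u)+\frac{\alpha_i}2\|u-z_i\|^2\le f(z_i)+\nabla f(z_i)^\top(u-z_i)+\frac{c_i}2\|u-z_i\|^2$ for the block function $f$, with $\alpha_i>0$. Standing hypotheses for a parameter sequence $(\sigma_j)_{j\ge0}\subset\mathcal{S}$, KKT points $w^\ast_j=(z^\ast_j,\mu^\ast_j)$ of $(P_{\sigma_j})$, and iterates $\bar w_j=(\bar z_j,\bar\mu_j)$ with $\bar z_{j+1}$ = result of $M$ sweeps on $L_\rho(\cdot,\bar\mu_j,\sigma_{j+1})$ from $\bar z_j$ and $\bar\mu_{j+1}=\bar\mu_j+\rho G(\bar z_{j+1},\sigma_{j+1})$; with $z^\infty_j$ the limit of infinitely many such sweeps, $w^\infty_j:=(z^\infty_j,\bar\mu_j+\rho G(z^\infty_j,\sigma_{j+1}))$, $d_j:=(\bar\mu_j-\mu^\ast_j)/\rho$;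 for every $j$: (A) constants $r_A,\delta_A,\lambda_A>0$ such that for every $s\in\mathcal{B}(\sigma_j,r_A)\cap\mathcal{S}$ there is a unique $w^\ast(s)\in\mathcal{B}(w^\ast_j,\delta_A)$ with $0\in F(w^\ast(s),s)+\mathcal{N}(w^\ast(s))$, $\|w^\ast(s)-w^\ast(s')\|\le\lambda_A\|F(w^\ast(s'),s)-F(w^\ast(s'),s')\|$ for $s,s'$ in that ball, and $w^\ast_{j+1}=w^\ast(\sigma_{j+1})$ whenever $\|\sigma_{j+1}-\sigma_j\|<r_A$; (B) constants $r_B,q_B,\lambda_B>0$, $\delta_B\ge\delta_A$ such that for all $d\in\mathcal{B}(0,q_B)$, $s\in\mathcal{B}(\sigma_j,r_B)\cap\mathcal{S}$ there is a unique $w^\ast_j(d,s)\in\mathcal{B}(w^\ast_j,\delta_B)$ with $0\in H^{\mu^\ast_j}_\rho(w^\ast_j(d,s),d,s)+\mathcal{N}(w^\ast_j(d,s))$ and $\|w^\ast_j(d,s)-w^\ast_j(d',s')\|\le\lambda_B\|H^{\mu^\ast_j}_\rho(w^\ast_j(d',s'),d,s)-H^{\mu^\ast_j}_\rho(w^\ast_j(d',s'),d',s')\|$; (C) constants $C,\delta,\psi>0$ such that $z^\infty_j$ exists, $w^\infty_j=w^\ast_j(d_j,\sigma_{j+1})$ whenever $d_j\in\mathcal{B}(0,q_B)$ and $\|\sigma_{j+1}-\sigma_j\|<r_B$, and $\|\bar z_j-z^\infty_j\|<\delta$ implies $\|\bar z_{j+1}-z^\infty_j\|\le CM^{-\psi}\|\bar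 z_j-z^\infty_j\|$. Coefficients: $\beta_w(\rho,M):=C(1+\rho\lambda_G)(1+\frac{\lambda_B\lambda_H}{\rho})M^{-\psi}+\frac{\lambda_B\lambda_H}{\rho}$ and $\beta_s(\rho,M):=C(1+\rho\lambda_G)\lambda_B\lambda_HM^{-\psi}+\frac{\lambda_B\lambda_H\lambda_A\lambda_F}{\rho}$. Here $\rho>0$ and $M\ge1$ are fixed; $(s_k)$ is a parameter sequence with KKT points $w^\ast_k$ of $(P_{s_k})$ and $\bar w_k=(\bar z_k,\bar\mu_k)$, $\bar z_k\in\mathcal{Z}$, the current suboptimal iterate. *)

(* Defs.v *)
From Stdlib Require Import Reals Lra List Arith Bool.
Open Scope R_scope.

(** * Finite-dimensional real vectors, represented as [nat -> R] with an
    explicit dimension; only coordinates [< dim] are meaningful. *)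
Definition vec := nat -> R.

Fixpoint fsum (n : nat) (f : nat -> R) : R :=
  match n with O => 0 | S n' => fsum n' f + f n' end.
Fixpoint nsum (n : nat) (f : nat -> nat) : nat :=
  match n with O => O | S n' => (nsum n' f + f n')%nat end.
Fixpoint fmax (n : nat) (f : nat -> R) : R :=
  match n with O => 0 | S n' => Rmax (fmax n' f) (f n') end.

Definition vsub (x y : vec) : vec := fun i => x i - y i.
Definition dot (n : nat) (x y : vec) : R := fsum n (fun i => x i * y i).
Definition sqnorm (n : nat) (x : vec) : R := fsum n (fun i => x i ^ 2).
Definition vnorm (n : nat) (x : vec) : R := sqrt (sqnorm n x).

Definition matvec (p : nat) (T : nat -> nat -> R) (x : vec) : vec :=
  fun r => fsum p (fun c => T r c * x c).
Definition is_opnorm (q p : nat) (T : nat -> nat -> R) (L : R) : Prop :=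
  is_lub (fun y => exists x, vnorm p x <= 1 /\ y = vnorm q (matvec p T x)) L.

(** * Multivariate real polynomials: lists of monomials (coefficient, exponents);
    the exponent list [e] stands for prod_i x_i^(nth i e 0). *)
Definition mono := (R * list nat)%type.
Definition mpoly := list mono.

Fixpoint mon_eval (e : list nat) (x : vec) (i : nat) : R :=
  match e with nil => 1 | a :: e' => x i ^ a * mon_eval e' x (S i) end.
Definition peval (p : mpoly) (x : vec) : R :=
  fold_right (fun m acc => fst m * mon_eval (snd m) x 0 + acc) 0 p.

Fixpoint exp_add (e1 e2 : list nat) : list nat :=
  match e1, e2 with
  | nil, _ => e2 | _, nil => e1
  | a :: e1', b :: e2' => (a + b)%nat :: exp_add e1' e2'
  end.
Definition pmul (p q : mpoly) : mpoly :=
  flat_map (fun m1 => map (fun m2 => (fst m1 * fst m2, exp_add (snd m1) (snd m2))) q) p.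
Definition pscale (c : R) (p : mpoly) : mpoly := map (fun m => (c * fst m, snd m)) p.
Definition pconst (c : R) : mpoly := (c, nil) :: nil.
(* polynomial sum is list concatenation [++] *)

Fixpoint dec_nth (k : nat) (e : list nat) : list nat :=
  match e, k with
  | nil, _ => nil
  | a :: e', O => (a - 1)%nat :: e'
  | a :: e', S k' => a :: dec_nth k' e'
  end.
Definition pderiv (k : nat) (p : mpoly) : mpoly :=
  map (fun m => (fst m * INR (nth k (snd m) 0%nat), dec_nth k (snd m))) p.
(** shift variables by [off] (embed a polynomial in the variables of a block) *)
Definition plift (off : nat) (p : mpoly) : mpoly :=
  map (fun m => (fst m, repeat 0%nat off ++ snd m)) p.
Definition pvars_le (n : nat) (p : mpoly) : Prop :=
  Forall (fun m => (length (snd m) <= n)%nat) p.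

Record problem := mkProblem {
  nP : nat;
  nblk : nat -> nat;
  box_lo : nat -> nat -> R;          (* Z_i = prod_{l < n_i} [box_lo i l, box_hi i l] *)
  box_hi : nat -> nat -> R;
  Jpol : nat -> mpoly;               (* J_i, polynomial in n_i variables *)
  nm : nat;
  Qpol : nat -> mpoly;               (* component l < m of Q_c, polynomial in n_z variables *)
  nq : nat -> nat;
  gpol : nat -> nat -> mpoly;        (* component r < q_i of g_i, polynomial in n_i variables *)
  np : nat;
  Tmat : nat -> nat -> nat -> R;     (* Tmat i r c = (T_i)_{r,c}, r < q_i, c < p *)
  Sset : vec -> Prop
}.

Section Derived.
Variable Pb : problem.

Definition off (i : nat) : nat := nsum i (nblk Pb).
Definition nz : nat := off (nP Pb).
Definition qoff (i : nat) : nat := nsum i (nq Pb).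
Definition qtot : nat := qoff (nP Pb).
Definition mq : nat := (nm Pb + qtot)%nat.

Definition wf_problem : Prop :=
  (forall i l, (i < nP Pb)%nat -> (l < nblk Pb i)%nat -> box_lo Pb i l <= box_hi Pb i l) /\
  (forall i, (i < nP Pb)%nat -> pvars_le (nblk Pb i) (Jpol Pb i)) /\
  (forall l, (l < nm Pb)%nat -> pvars_le nz (Qpol Pb l)) /\
  (forall i r, (i < nP Pb)%nat -> (r < nq Pb i)%nat -> pvars_le (nblk Pb i) (gpol Pb i r)).

(** z in Z = Z_1 x ... x Z_P (z is the stacked vector (z_1,...,z_P)) *)
Definition inZ (z : vec) : Prop :=
  forall i l, (i < nP Pb)%nat -> (l < nblk Pb i)%nat ->
    box_lo Pb i l <= z (off i + l)%nat <= box_hi Pb i l.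

(** J(z) = sum_i J_i(z_i) as a polynomial in z *)
Definition Jpoly : mpoly := flat_map (fun i => plift (off i) (Jpol Pb i)) (seq 0 (nP Pb)).

Definition inqblk (i r : nat) : bool := (qoff i <=? r)%nat && (r <? qoff i + nq Pb i)%nat.

(** component r < m+q of G(z,s) = (Q_c(z), g_1(z_1)+T_1 s, ..., g_P(z_P)+T_P s):
    polynomial part in z and affine part in s *)
Definition Gpoly (r : nat) : mpoly :=
  if (r <? nm Pb)%nat then Qpol Pb r
  else flat_map (fun i => if inqblk i (r - nm Pb) then
                             plift (off i) (gpol Pb i (r - nm Pb - qoff i))
                           else nil) (seq 0 (nP Pb)).
Definition Gaff (s : vec) (r : nat) : R :=
  if (r <? nm Pb)%nat then 0
  else fsum (nP Pb) (fun i => if inqblk i (r - nm Pb) then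
                                 fsum (np Pb) (fun c => Tmat Pb i (r - nm Pb - qoff i) c * s c)
                               else 0).
Definition Gval (z s : vec) (r : nat) : R := peval (Gpoly r) z + Gaff s r.

(** w = (z, mu) *)
Definition W := (vec * vec)%type.
Definition wsub (w w' : W) : W := (vsub (fst w) (fst w'), vsub (snd w) (snd w')).
Definition wnorm (w : W) : R := sqrt (sqnorm nz (fst w) + sqnorm mq (snd w)).
Definition weq (w w' : W) : Prop :=
  (forall k, (k < nz)%nat -> fst w k = fst w' k) /\ (forall r, (r < mq)%nat -> snd w r = snd w' r).

Definition Fz (w : W) (k : nat) : R :=
  peval (pderiv k Jpoly) (fst w) + fsum mq (fun r => peval (pderiv k (Gpoly r)) (fst w) * snd w r).
Definition Ffun (w : W) (s : vec) : W := (fun k => Fz w k, fun r => Gval (fst w) s r).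
Definition Hfun (rho : R) (mut : vec) (w : W) (d s : vec) : W :=
  (fun k => Fz w k, fun r => Gval (fst w) s r + d r + (mut r - snd w r) / rho).

(** normal cone of Z x R^{m+q} at w (empty if w is outside) *)
Definition normal_cone (w v : W) : Prop :=
  inZ (fst w) /\
  forall w', inZ (fst w') ->
    dot nz (fst v) (vsub (fst w') (fst w)) + dot mq (snd v) (vsub (snd w') (snd w)) <= 0.
Definition zero_in_plus_N (Fv w : W) : Prop :=
  exists v, normal_cone w v /\
    (forall k, (k < nz)%nat -> fst Fv k + fst v k = 0) /\
    (forall r, (r < mq)%nat -> snd Fv r + snd v r = 0).
Definition KKT (w : W) (s : vec) : Prop := zero_in_plus_N (Ffun w s) w.

(** augmented Lagrangian L_rho(z,mu,s) as a polynomial in z *)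
Definition Gpoly_s (s : vec) (r : nat) : mpoly := Gpoly r ++ pconst (Gaff s r).
Definition Lpoly (rho : R) (mu s : vec) : mpoly :=
  Jpoly ++ flat_map (fun r => pmul (pconst (mu r) ++ pscale (rho / 2) (Gpoly_s s r)) (Gpoly_s s r))
                    (seq 0 mq).
Definition Lval (rho : R) (mu s z : vec) : R := peval (Lpoly rho mu s) z.
Definition gradL (rho : R) (mu s z : vec) (k : nat) : R := peval (pderiv k (Lpoly rho mu s)) z.

Definition clamp (a b x : R) : R := Rmax a (Rmin b x).
Definition blk (i : nat) (z : vec) : vec := fun l => z (off i + l)%nat.
Definition upd (i : nat) (z u : vec) : vec :=
  fun k => if (off i <=? k)%nat && (k <? off i + nblk Pb i)%nat then u (k - off i)%nat else z k.
Definition proj_step (rho : R) (mu s : vec) (i : nat) (z : vec) (c : R) : vec :=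
  fun l => clamp (box_lo Pb i l) (box_hi Pb i l)
                 (z (off i + l)%nat - gradL rho mu s z (off i + l)%nat / c).
(** backtracking acceptance test for block function f = L_rho(z with block i := .) *)
Definition bt_cond (rho : R) (mu s : vec) (alpha : nat -> R) (i : nat) (z : vec) (c : R) : Prop :=
  let u := proj_step rho mu s i z c in
  let dz := vsub u (blk i z) in
  Lval rho mu s (upd i z u) + alpha i / 2 * sqnorm (nblk Pb i) dz
    <= Lval rho mu s z + dot (nblk Pb i) (fun l => gradL rho mu s z (off i + l)%nat) dz
       + c / 2 * sqnorm (nblk Pb i) dz.
Definition block_step (c0 alpha : nat -> R) (beta rho : R) (mu s : vec) (i : nat) (z z' : vec) : Prop :=
  exists t : nat,
    bt_cond rho mu s alpha i z (c0 i * beta ^ t) /\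
    (forall t', (t' < t)%nat -> ~ bt_cond rho mu s alpha i z (c0 i * beta ^ t')) /\
    (forall k, z' k = upd i z (proj_step rho mu s i z (c0 i * beta ^ t)) k).
Definition sweep (c0 alpha : nat -> R) (beta rho : R) (mu s : vec) (z z' : vec) : Prop :=
  exists zs : nat -> vec,
    (forall k, zs O k = z k) /\
    (forall i, (i < nP Pb)%nat -> block_step c0 alpha beta rho mu s i (zs i) (zs (S i))) /\
    (forall k, z' k = zs (nP Pb) k).
Definition Msweeps (c0 alpha : nat -> R) (beta rho : R) (mu s : vec) (M : nat) (z z' : vec) : Prop :=
  exists zs : nat -> vec,
    (forall k, zs O k = z k) /\
    (forall n, (n < M)%nat -> sweep c0 alpha beta rho mu s (zs n) (zs (S n))) /\
    (forall k, z' k = zs M k).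
Definition sweep_limit (c0 alpha : nat -> R) (beta rho : R) (mu s : vec) (z zinf : vec) : Prop :=
  exists zs : nat -> vec,
    (forall k, zs O k = z k) /\
    (forall n, sweep c0 alpha beta rho mu s (zs n) (zs (S n))) /\
    (forall k, (k < nz)%nat -> Un_cv (fun n => zs n k) (zinf k)).

Definition lamF_def (lamF : R) : Prop :=
  exists L : nat -> R,
    (forall i, (i < nP Pb)%nat -> is_opnorm (nq Pb i) (np Pb) (Tmat Pb i) (L i)) /\
    lamF = INR (nP Pb) * fmax (nP Pb) L.
Definition lamH_prop (rho lamH : R) : Prop :=
  0 < lamH /\
  forall (mut : vec) (w : W) (d d' s s' : vec),
    wnorm (wsub (Hfun rho mut w d s) (Hfun rho mut w d' s'))
      <= lamH * sqrt (sqnorm mq (vsub d d') + sqnorm (np Pb) (vsub s s')).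
Definition lamG_prop (lamG : R) : Prop :=
  0 < lamG /\
  forall s z z', inZ z -> inZ z' ->
    vnorm mq (vsub (fun r => Gval z s r) (fun r => Gval z' s r)) <= lamG * vnorm nz (vsub z z').

Definition wball (w0 : W) (r : R) (w : W) : Prop := wnorm (wsub w w0) < r.
Definition sball (s0 : vec) (r : R) (s : vec) : Prop := vnorm (np Pb) (vsub s s0) < r.

Definition HypA (sig : nat -> vec) (wst : nat -> W) (j : nat) (rA dA lA : R) : Prop :=
  exists wA : vec -> W,
    (forall s, sball (sig j) rA s -> Sset Pb s ->
       wball (wst j) dA (wA s) /\ KKT (wA s) s /\
       (forall w, wball (wst j) dA w -> KKT w s -> weq w (wA s))) /\
    (forall s s', sball (sig j) rA s -> Sset Pb s -> sball (sig j) rA s' -> Sset Pb s' ->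
       wnorm (wsub (wA s) (wA s')) <= lA * wnorm (wsub (Ffun (wA s') s) (Ffun (wA s') s'))) /\
    (vnorm (np Pb) (vsub (sig (S j)) (sig j)) < rA -> weq (wst (S j)) (wA (sig (S j)))).

Definition HypB (rho : R) (sig : nat -> vec) (wst : nat -> W) (j : nat) (rB qB lB dB : R)
  (wB : vec -> vec -> W) : Prop :=
    (forall d s, vnorm mq d < qB -> sball (sig j) rB s -> Sset Pb s ->
       wball (wst j) dB (wB d s) /\
       zero_in_plus_N (Hfun rho (snd (wst j)) (wB d s) d s) (wB d s) /\
       (forall w, wball (wst j) dB w -> zero_in_plus_N (Hfun rho (snd (wst j)) w d s) w ->
                  weq w (wB d s))) /\
    (forall d s d' s', vnorm mq d < qB -> sball (sig j) rB s -> Sset Pb s ->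
       vnorm mq d' < qB -> sball (sig j) rB s' -> Sset Pb s' ->
       wnorm (wsub (wB d s) (wB d' s'))
         <= lB * wnorm (wsub (Hfun rho (snd (wst j)) (wB d' s') d s)
                             (Hfun rho (snd (wst j)) (wB d' s') d' s'))).

Definition HypC (c0 alpha : nat -> R) (beta rho : R) (M : nat) (sig : nat -> vec) (wst : nat -> W)
  (zbar mubar : nat -> vec) (j : nat) (rB qB : R) (wB : vec -> vec -> W) (Cc del psi : R) : Prop :=
  exists zinf : vec,
    sweep_limit c0 alpha beta rho (mubar j) (sig (S j)) (zbar j) zinf /\
    (let dj := fun r => (mubar j r - snd (wst j) r) / rho in
     vnorm mq dj < qB -> vnorm (np Pb) (vsub (sig (S j)) (sig j)) < rB ->
     weq (zinf, fun r => mubar j r + rho * Gval zinf (sig (S j)) r) (wB dj (sig (S j)))) /\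
    (vnorm nz (vsub (zbar j) zinf) < del ->
     vnorm nz (vsub (zbar (S j)) zinf) <= Cc * Rpower (INR M) (- psi) * vnorm nz (vsub (zbar j) zinf)).

End Derived.

Definition beta_w (Cc lamG lamB lamH psi rho : R) (M : nat) : R :=
  Cc * (1 + rho * lamG) * (1 + lamB * lamH / rho) * Rpower (INR M) (- psi) + lamB * lamH / rho.
Definition beta_s (Cc lamG lamB lamH lamA lamF psi rho : R) (M : nat) : R :=
  Cc * (1 + rho * lamG) * lamB * lamH * Rpower (INR M) (- psi) + lamB * lamH * lamA * lamF / rho.

Definition shom (s : nat -> vec) (k D j : nat) : vec :=
  fun c => (1 - INR j / INR D) * s k c + INR j / INR D * s (S k) c.

(* Main.v *)
Require Import Defs.
From Stdlib Require Import Reals Lra Lia List Arith Psatz.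
Open Scope R_scope.

Lemma fsum_ext n f g : (forall i, (i < n)%nat -> f i = g i) -> fsum n f = fsum n g.
Proof. induction n; simpl; intros H; auto. rewrite IHn by (intros; apply H; lia). rewrite H by lia; auto. Qed.
Lemma fsum_plus n f g : fsum n (fun i => f i + g i) = fsum n f + fsum n g.
Proof. induction n; simpl; [lra|rewrite IHn; lra]. Qed.
Lemma fsum_minus n f g : fsum n (fun i => f i - g i) = fsum n f - fsum n g.
Proof. induction n; simpl; [lra|rewrite IHn; lra]. Qed.
Lemma fsum_scal n c f : fsum n (fun i => c * f i) = c * fsum n f.
Proof. induction n; simpl; [lra|rewrite IHn; lra]. Qed.
Lemma fsum_nonneg n f : (forall i, (i < n)%nat -> 0 <= f i) -> 0 <= fsum n f.
Proof. induction n; simpl; intros H; [lra|].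
  assert (0 <= fsum n f) by (apply IHn; intros; apply H; lia).
  assert (0 <= f n) by (apply H; lia). lra. Qed.
Lemma fsum_le n f g : (forall i, (i < n)%nat -> f i <= g i) -> fsum n f <= fsum n g.
Proof. induction n; simpl; intros H; [lra|].
  assert (fsum n f <= fsum n g) by (apply IHn; intros; apply H; lia).
  assert (f n <= g n) by (apply H; lia). lra. Qed.
Lemma fsum_zero n f : (forall i, (i < n)%nat -> f i = 0) -> fsum n f = 0.
Proof. intros H; rewrite (fsum_ext n f (fun _ => 0)) by auto. clear H; induction n; simpl; lra. Qed.
Lemma fsum_mono n m f : (m <= n)%nat -> (forall i, 0 <= f i) -> fsum m f <= fsum n f.
Proof. intros Hle Hf. induction Hle; [lra|]. simpl. specialize (Hf m0). lra. Qed.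
Lemma fsum_swap n m (f : nat -> nat -> R) :
  fsum n (fun i => fsum m (fun j => f i j)) = fsum m (fun j => fsum n (fun i => f i j)).
Proof. induction n; simpl. - symmetry; apply fsum_zero; auto.
  - rewrite IHn, <- fsum_plus. auto. Qed.

Lemma sqnorm_nonneg n x : 0 <= sqnorm n x.
Proof. unfold sqnorm; apply fsum_nonneg; intros; nra. Qed.
Lemma vnorm_nonneg n x : 0 <= vnorm n x.
Proof. unfold vnorm; apply sqrt_pos. Qed.

Lemma CS n a b : (fsum n (fun i => a i * b i))^2 <= fsum n (fun i => a i ^2) * fsum n (fun i => b i^2).
Proof.
  induction n; [simpl; lra|].
  set (C := fsum n (fun i => a i * b i)) in *.
  set (A := fsum n (fun i => a i ^2)) in *.
  set (B := fsum n (fun i => b i ^2)) in *.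
  assert (HA : 0 <= A) by (apply fsum_nonneg; intros; nra).
  assert (HB : 0 <= B) by (apply fsum_nonneg; intros; nra).
  assert (H2 : 2 * C * (a n * b n) <= A * b n ^2 + B * a n ^ 2).
  { assert (HX: (2 * C * (a n * b n))^2 <= (A * b n ^2 + B * a n ^ 2)^2).
    { assert (4*A*B*(a n * b n)^2 <= (A * b n ^2 + B * a n ^ 2)^2) by (assert (0 <= (A*b n^2 - B*a n^2)^2) by apply pow2_ge_0; nra).
      assert (4*C^2*(a n * b n)^2 <= 4*A*B*(a n * b n)^2).
      { apply Rmult_le_compat_r. nra. lra. }
      nra. }
    assert (0 <= A * b n ^2 + B * a n ^ 2) by nra.
    destruct (Rle_dec (2 * C * (a n * b n)) 0); [lra|]. nra. }
  change (fsum (S n) (fun i => a i * b i)) with (C + a n * b n).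
  change (fsum (S n) (fun i => a i ^2)) with (A + a n ^2).
  change (fsum (S n) (fun i => b i ^2)) with (B + b n ^2).
  assert (E1: (C + a n * b n)^2 = C^2 + 2*C*(a n * b n) + (a n * b n)^2) by ring.
  assert (E2: (A + a n ^2) * (B + b n^2) = A*B + (A*b n^2 + B * a n^2) + (a n * b n)^2) by ring.
  rewrite E1, E2. lra.
Qed.

Lemma sqrt_le_of_sq S a : 0 <= a -> S <= a^2 -> sqrt S <= a.
Proof. intros Ha HS. rewrite <- (sqrt_pow2 a Ha). apply sqrt_le_1_alt; auto. Qed.
Lemma sqrt_add_le a b : 0 <= a -> 0 <= b -> sqrt (a + b) <= sqrt a + sqrt b.
Proof. intros Ha Hb. apply sqrt_le_of_sq. pose proof (sqrt_pos a); pose proof (sqrt_pos b); lra.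
  pose proof (sqrt_sqrt a Ha); pose proof (sqrt_sqrt b Hb).
  pose proof (sqrt_pos a); pose proof (sqrt_pos b). nra. Qed.
Lemma vnorm_sq n x : vnorm n x ^ 2 = sqnorm n x.
Proof. unfold vnorm. simpl. rewrite Rmult_1_r. apply sqrt_sqrt, sqnorm_nonneg. Qed.

Lemma vnorm_ext n x y : (forall i, (i < n)%nat -> x i = y i) -> vnorm n x = vnorm n y.
Proof. intros H. unfold vnorm, sqnorm. f_equal. apply fsum_ext. intros; rewrite H; auto. Qed.

Lemma vnorm_plus n x y : vnorm n (fun i => x i + y i) <= vnorm n x + vnorm n y.
Proof.
  apply sqrt_le_of_sq. pose proof (vnorm_nonneg n x); pose proof (vnorm_nonneg n y); lra.
  assert (E: sqnorm n (fun i => x i + y i) = sqnorm n x + 2 * fsum n (fun i => x i * y i) + sqnorm n y).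
  { unfold sqnorm. rewrite <- fsum_scal, <- !fsum_plus. apply fsum_ext; intros; ring. }
  rewrite E. pose proof (CS n x y). fold (sqnorm n x) (sqnorm n y) in H.
  rewrite <- (vnorm_sq n x), <- (vnorm_sq n y) in *.
  pose proof (vnorm_nonneg n x); pose proof (vnorm_nonneg n y).
  set (C := fsum n (fun i => x i * y i)) in *.
  assert (C <= vnorm n x * vnorm n y).
  { set (p := vnorm n x * vnorm n y). assert (0 <= p) by (apply Rmult_le_pos; auto).
    assert (C^2 <= p^2) by (unfold p; nra).
    destruct (Rle_dec C p); auto. exfalso. nra. }
  nra.
Qed.

Lemma vnorm_tri n x y z : vnorm n (vsub x z) <= vnorm n (vsub x y) + vnorm n (vsub y z).
Proof. rewrite (vnorm_ext n (vsub x z) (fun i => vsub x y i + vsub y z i)).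
  apply vnorm_plus. intros; unfold vsub; ring. Qed.

Lemma vnorm_scal n c x : vnorm n (fun i => c * x i) = Rabs c * vnorm n x.
Proof. unfold vnorm, sqnorm.
  rewrite (fsum_ext n _ (fun i => c^2 * x i ^2)) by (intros; ring).
  rewrite fsum_scal, sqrt_mult. rewrite <- (sqrt_Rsqr_abs c). unfold Rsqr. f_equal. f_equal. ring.
  nra. apply fsum_nonneg; intros; nra. Qed.

Lemma vnorm_sym n x y : vnorm n (vsub x y) = vnorm n (vsub y x).
Proof. unfold vnorm, sqnorm, vsub. f_equal. apply fsum_ext; intros; ring. Qed.

Lemma vnorm_zero n x : (forall i, (i < n)%nat -> x i = 0) -> vnorm n x = 0.
Proof. intros H. unfold vnorm, sqnorm. rewrite fsum_zero. apply sqrt_0. intros; rewrite H; auto; ring. Qed.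

Lemma pair_tri S1 S2 T1 T2 U1 U2 : 0 <= S1 -> 0 <= S2 -> 0 <= T1 -> 0 <= T2 -> 0 <= U1 -> 0 <= U2 ->
  sqrt S1 <= sqrt T1 + sqrt U1 -> sqrt S2 <= sqrt T2 + sqrt U2 ->
  sqrt (S1 + S2) <= sqrt (T1 + T2) + sqrt (U1 + U2).
Proof.
  intros. set (f := fun i : nat => match i with O => sqrt T1 | _ => sqrt T2 end).
  set (g := fun i : nat => match i with O => sqrt U1 | _ => sqrt U2 end).
  pose proof (vnorm_plus 2 f g). unfold vnorm, sqnorm in H7. simpl in H7.
  rewrite !Rmult_1_r, !Rplus_0_l, !sqrt_sqrt in H7 by auto.
  eapply Rle_trans; [|exact H7]. apply sqrt_le_1_alt.
  pose proof (sqrt_sqrt S1 H); pose proof (sqrt_sqrt S2 H0).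
  pose proof (sqrt_pos S1); pose proof (sqrt_pos S2).
  pose proof (sqrt_pos T1); pose proof (sqrt_pos T2).
  pose proof (sqrt_pos U1); pose proof (sqrt_pos U2).
  nra.
Qed.

Section W.
Variable Pb : problem.
Lemma vnorm_sqrt n x : vnorm n x = sqrt (sqnorm n x). Proof. reflexivity. Qed.

Lemma wnorm_tri a b c : wnorm Pb (wsub a c) <= wnorm Pb (wsub a b) + wnorm Pb (wsub b c).
Proof. unfold wnorm, wsub; simpl. apply pair_tri; try apply sqnorm_nonneg; rewrite <- !vnorm_sqrt; apply vnorm_tri. Qed.

Lemma wnorm_sym a b : wnorm Pb (wsub a b) = wnorm Pb (wsub b a).
Proof. unfold wnorm, wsub; simpl. f_equal. f_equal; unfold sqnorm, vsub; apply fsum_ext; intros; ring. Qed.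

Lemma wnorm_fst a b : vnorm (nz Pb) (vsub (fst a) (fst b)) <= wnorm Pb (wsub a b).
Proof. unfold wnorm, vnorm. apply sqrt_le_1_alt. simpl. pose proof (sqnorm_nonneg (mq Pb) (vsub (snd a) (snd b))). lra. Qed.
Lemma wnorm_snd a b : vnorm (mq Pb) (vsub (snd a) (snd b)) <= wnorm Pb (wsub a b).
Proof. unfold wnorm, vnorm. apply sqrt_le_1_alt. simpl. pose proof (sqnorm_nonneg (nz Pb) (vsub (fst a) (fst b))). lra. Qed.
Lemma wnorm_split a b : wnorm Pb (wsub a b) <= vnorm (nz Pb) (vsub (fst a) (fst b)) + vnorm (mq Pb) (vsub (snd a) (snd b)).
Proof. unfold wnorm, vnorm. simpl. apply sqrt_add_le; apply sqnorm_nonneg. Qed.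
Lemma wnorm_nonneg w : 0 <= wnorm Pb w. Proof. apply sqrt_pos. Qed.
Lemma wnorm_self a : wnorm Pb (wsub a a) = 0.
Proof. unfold wnorm, sqnorm, vsub. simpl. rewrite (fsum_zero (nz Pb)), (fsum_zero (mq Pb)). rewrite Rplus_0_l; apply sqrt_0. all: intros; unfold vsub; ring. Qed.

Lemma weq_l a a' b : weq Pb a a' -> wnorm Pb (wsub a b) = wnorm Pb (wsub a' b).
Proof. intros [H1 H2]. unfold wnorm, sqnorm, wsub, vsub; simpl. f_equal. f_equal; apply fsum_ext; intros i Hi;
  [rewrite H1|rewrite H2]; auto. Qed.
Lemma weq_r a b b' : weq Pb b b' -> wnorm Pb (wsub a b) = wnorm Pb (wsub a b').
Proof. intros H. rewrite (wnorm_sym a b), (wnorm_sym a b'). apply weq_l; auto. Qed.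
End W.

Lemma fsum_ones n : fsum n (fun _ => 1) = INR n.
Proof. induction n; simpl fsum; [simpl; lra|]. rewrite IHn, S_INR; lra. Qed.

Lemma sum_sq_le n a : (fsum n a)^2 <= INR n * fsum n (fun i => a i ^2).
Proof. pose proof (CS n a (fun _ => 1)). cbv beta in H.
  rewrite (fsum_ext n (fun i => a i * 1) a) in H by (intros; ring).
  rewrite (fsum_ext n (fun _ => 1^2) (fun _ => 1)) in H by (intros; ring).
  rewrite fsum_ones in H. lra. Qed.

Lemma fsum_S n f : fsum (S n) f = fsum n f + f n. Proof. reflexivity. Qed.

Lemma fsum_range N a n f :
  fsum N (fun r => if ((a <=? r)%nat && (r <? a + n)%nat)%bool then f (r - a)%nat else 0)
  = fsum (Nat.min n (N - a)) f.
Proof.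
  induction N. { simpl. destruct n; reflexivity. }
  rewrite fsum_S. cbv beta. rewrite IHN.
  destruct (Nat.leb_spec a N); destruct (Nat.ltb_spec N (a+n)); simpl andb.
  - replace (Nat.min n (S N - a)) with (S (N - a)) by lia.
    replace (Nat.min n (N - a)) with (N - a)%nat by lia. reflexivity.
  - replace (Nat.min n (S N - a)) with (Nat.min n (N - a)) by lia. ring.
  - replace (Nat.min n (S N - a)) with (Nat.min n (N - a)) by lia. ring.
  - replace (Nat.min n (S N - a)) with (Nat.min n (N - a)) by lia. ring.
Qed.

Lemma fmax_nonneg n L : 0 <= fmax n L.
Proof. induction n; simpl; [lra|]. eapply Rle_trans; [exact IHn|apply Rmax_l]. Qed.
Lemma fmax_ge n L i : (i < n)%nat -> L i <= fmax n L.
Proof. induction n; intros H; [lia|]. simpl. destruct (Nat.eq_dec i n).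
  subst; apply Rmax_r. eapply Rle_trans; [apply IHn; lia|apply Rmax_l]. Qed.

Lemma sqnorm_zero_coord n x : sqnorm n x = 0 -> forall i, (i < n)%nat -> x i = 0.
Proof. unfold sqnorm. induction n; intros H i Hi; [lia|]. rewrite fsum_S in H.
  assert (0 <= fsum n (fun i => x i ^2)) by (apply fsum_nonneg; intros; nra).
  assert (0 <= x n ^2) by nra.
  destruct (Nat.eq_dec i n). subst. apply Rsqr_0_uniq; unfold Rsqr. replace (x n * x n) with (x n ^2) by ring; lra. apply IHn; [lra|lia]. Qed.

Lemma opnorm_bound q p T L : is_opnorm q p T L -> 0 <= L /\ forall x, vnorm q (matvec p T x) <= L * vnorm p x.
Proof.
  intros [Hub Hlub].
  assert (HL: 0 <= L).
  { apply Rle_trans with (vnorm q (matvec p T (fun _ => 0))). apply vnorm_nonneg.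
    apply Hub. exists (fun _ => 0). split; auto. rewrite vnorm_zero; auto; lra. }
  split; auto. intros x.
  destruct (Req_dec (vnorm p x) 0) as [H0|H0].
  - rewrite H0. rewrite vnorm_zero. lra. intros r _. unfold matvec. apply fsum_zero. intros c Hc.
    unfold vnorm in H0. apply sqrt_eq_0 in H0; [|apply sqnorm_nonneg].
    rewrite (sqnorm_zero_coord p x H0 c Hc). ring.
  - pose proof (vnorm_nonneg p x). set (t := vnorm p x) in *.
    assert (t > 0) by lra.
    assert (Hy: vnorm q (matvec p T (fun c => / t * x c)) <= L).
    { apply Hub. exists (fun c => / t * x c). split; auto.
      rewrite vnorm_scal. rewrite Rabs_right by (left; apply Rinv_0_lt_compat; lra). fold t.
      rewrite Rinv_l by lra. lra. }
    rewrite (vnorm_ext q _ (fun r => / t * matvec p T x r)) in Hy.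
    rewrite vnorm_scal, Rabs_right in Hy by (left; apply Rinv_0_lt_compat; lra).
    apply Rmult_le_compat_l with (r := t) in Hy; [|lra].
    rewrite <- Rmult_assoc, Rinv_r in Hy by lra. lra.
    intros r _. unfold matvec. rewrite <- fsum_scal. apply fsum_ext; intros; ring.
Qed.

Section G.
Variable Pb : problem.

Lemma Gaff_diff s s' r : Gaff Pb s' r - Gaff Pb s r =
  fsum (nP Pb) (fun i => if (r <? nm Pb)%nat then 0 else
     if inqblk Pb i (r - nm Pb) then matvec (np Pb) (Tmat Pb i) (vsub s' s) (r - nm Pb - qoff Pb i)%nat else 0).
Proof.
  unfold Gaff. destruct (r <? nm Pb)%nat. rewrite fsum_zero; auto; ring.
  rewrite <- fsum_minus. apply fsum_ext; intros i _. destruct (inqblk Pb i (r - nm Pb)); [|ring].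
  unfold matvec, vsub. rewrite <- fsum_minus. apply fsum_ext; intros; ring.
Qed.

Lemma Gaff_bound lamF s s' : lamF_def Pb lamF ->
  vnorm (mq Pb) (fun r => Gaff Pb s' r - Gaff Pb s r) <= lamF * vnorm (np Pb) (vsub s' s).
Proof.
  intros [L [HL ->]].
  set (v := fun i r => matvec (np Pb) (Tmat Pb i) (vsub s' s) r).
  set (h := fun i r => if (r <? nm Pb)%nat then 0 else
     if inqblk Pb i (r - nm Pb) then v i (r - nm Pb - qoff Pb i)%nat else 0).
  set (nd := vnorm (np Pb) (vsub s' s)).
  set (F := fmax (nP Pb) L).
  assert (HF : 0 <= F) by apply fmax_nonneg.
  assert (Hnd : 0 <= nd) by apply vnorm_nonneg.
  assert (Hi : forall i, (i < nP Pb)%nat -> fsum (mq Pb) (fun r => h i r ^2) <= F^2 * nd^2).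
  { intros i Hi.
    assert (E: fsum (mq Pb) (fun r => h i r ^2) =
      fsum (mq Pb) (fun r => if ((nm Pb + qoff Pb i <=? r)%nat && (r <? nm Pb + qoff Pb i + nq Pb i)%nat)%bool
                            then (fun r' => v i r' ^2) (r - (nm Pb + qoff Pb i))%nat else 0)).
    { apply fsum_ext; intros r _. unfold h, inqblk.
      destruct (Nat.ltb_spec r (nm Pb)).
      - replace (nm Pb + qoff Pb i <=? r)%nat with false. simpl; ring.
        symmetry; apply Nat.leb_gt; lia.
      - destruct (Nat.leb_spec (qoff Pb i) (r - nm Pb)); destruct (Nat.ltb_spec (r - nm Pb) (qoff Pb i + nq Pb i));
        destruct (Nat.leb_spec (nm Pb + qoff Pb i) r); destruct (Nat.ltb_spec r (nm Pb + qoff Pb i + nq Pb i));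
        simpl; try lia; try ring.
        replace (r - nm Pb - qoff Pb i)%nat with (r - (nm Pb + qoff Pb i))%nat by lia. reflexivity. }
    rewrite E, (fsum_range (mq Pb) (nm Pb + qoff Pb i) (nq Pb i) (fun r' => v i r' ^2)).
    eapply Rle_trans. apply fsum_mono with (n := nq Pb i). lia. intros; cbv beta; nra.
    change (fsum (nq Pb i) (fun r' => v i r' ^2)) with (sqnorm (nq Pb i) (v i)).
    rewrite <- vnorm_sq.
    destruct (opnorm_bound _ _ _ _ (HL i Hi)) as [HL0 HLb].
    specialize (HLb (vsub s' s)). fold nd in HLb. fold (v i) in HLb.
    pose proof (vnorm_nonneg (nq Pb i) (v i)).
    assert (L i <= F) by (apply fmax_ge; auto).
    assert (vnorm (nq Pb i) (v i) <= F * nd).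
    { eapply Rle_trans; [exact HLb| apply Rmult_le_compat_r; auto]. }
    replace (F^2 * nd^2) with ((F*nd)^2) by ring. apply pow_incr; auto. }
  apply sqrt_le_of_sq. apply Rmult_le_pos; [apply Rmult_le_pos; [apply pos_INR|auto]|auto].
  unfold sqnorm.
  rewrite (fsum_ext (mq Pb) _ (fun r => (fsum (nP Pb) (fun i => h i r))^2)).
  2:{ intros r _. rewrite (Gaff_diff s s' r). reflexivity. }
  eapply Rle_trans. apply fsum_le. intros r _. apply sum_sq_le.
  rewrite fsum_scal, <- fsum_swap.
  eapply Rle_trans. apply Rmult_le_compat_l. apply pos_INR. apply fsum_le. intros i Hi0. apply (Hi i Hi0).
  rewrite (fsum_ext (nP Pb) _ (fun _ => F^2 * nd^2 * 1)) by (intros; ring).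
  rewrite fsum_scal, fsum_ones. right; ring.
Qed.
End G.

Lemma cv_bounds u l a b : Un_cv u l -> (forall n, a <= u n <= b) -> a <= l <= b.
Proof.
  intros Hc Hb. split.
  - destruct (Rle_dec a l); auto. exfalso. destruct (Hc (a - l)) as [N HN]; [lra|].
    specialize (HN N (le_n N)). unfold Rdist in HN. specialize (Hb N).
    apply Rabs_def2 in HN. lra.
  - destruct (Rle_dec l b); auto. exfalso. destruct (Hc (l - b)) as [N HN]; [lra|].
    specialize (HN N (le_n N)). unfold Rdist in HN. specialize (Hb N).
    apply Rabs_def2 in HN. lra.
Qed.

Section Z.
Variable Pb : problem.
Lemma off_S i : off Pb (S i) = (off Pb i + nblk Pb i)%nat. Proof. reflexivity. Qed.
Lemma off_mono i j : (i <= j)%nat -> (off Pb i <= off Pb j)%nat.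
Proof. induction 1; auto. rewrite off_S. lia. Qed.

Lemma upd_inZ i z u z' : (i < nP Pb)%nat -> inZ Pb z ->
  (forall l, (l < nblk Pb i)%nat -> box_lo Pb i l <= u l <= box_hi Pb i l) ->
  (forall k, z' k = upd Pb i z u k) -> inZ Pb z'.
Proof.
  intros Hi Hz Hu Hz' i' l Hi' Hl. rewrite Hz'. unfold upd.
  destruct (Nat.lt_total i' i) as [H|[H|H]].
  - assert (off Pb (S i') <= off Pb i)%nat by (apply off_mono; lia). rewrite off_S in H0.
    replace (off Pb i <=? off Pb i' + l)%nat with false by (symmetry; apply Nat.leb_gt; lia).
    simpl. apply Hz; auto.
  - subst. replace (off Pb i <=? off Pb i + l)%nat with true by (symmetry; apply Nat.leb_le; lia).
    replace (off Pb i + l <? off Pb i + nblk Pb i)%nat with true by (symmetry; apply Nat.ltb_lt; lia).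
    simpl. replace (off Pb i + l - off Pb i)%nat with l by lia. auto.
  - assert (off Pb (S i) <= off Pb i')%nat by (apply off_mono; lia). rewrite off_S in H0.
    replace (off Pb i' + l <? off Pb i + nblk Pb i)%nat with false by (symmetry; apply Nat.ltb_ge; lia).
    rewrite Bool.andb_false_r. apply Hz; auto.
Qed.

Lemma clamp_in a b x : a <= b -> a <= clamp a b x <= b.
Proof. intros. unfold clamp. split. apply Rmax_l. apply Rmax_lub; auto. apply Rmin_l. Qed.

Lemma block_inZ c0 alpha beta rho mu s i z z' : wf_problem Pb -> (i < nP Pb)%nat -> inZ Pb z ->
  block_step Pb c0 alpha beta rho mu s i z z' -> inZ Pb z'.
Proof.
  intros [Hwf _] Hi Hz [t [_ [_ Ht]]]. eapply upd_inZ; eauto.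
  intros l Hl. unfold proj_step. apply clamp_in. apply Hwf; auto.
Qed.

Lemma sweep_inZ c0 alpha beta rho mu s z z' : wf_problem Pb -> inZ Pb z ->
  sweep Pb c0 alpha beta rho mu s z z' -> inZ Pb z'.
Proof.
  intros Hwf Hz [zs [H0 [Hs Hend]]].
  assert (forall i, (i <= nP Pb)%nat -> inZ Pb (zs i)).
  { induction i; intros Hi.
    - intros i' l Hi' Hl. rewrite H0. apply Hz; auto.
    - apply (block_inZ c0 alpha beta rho mu s i (zs i) (zs (S i))); [auto|lia|apply IHi; lia|apply Hs; lia]. }
  intros i l Hi Hl. rewrite Hend. apply H; auto.
Qed.

Lemma Msweeps_inZ c0 alpha beta rho mu s M z z' : wf_problem Pb -> inZ Pb z ->
  Msweeps Pb c0 alpha beta rho mu s M z z' -> inZ Pb z'.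
Proof.
  intros Hwf Hz [zs [H0 [Hs Hend]]].
  assert (forall i, (i <= M)%nat -> inZ Pb (zs i)).
  { induction i; intros Hi.
    - intros i' l Hi' Hl. rewrite H0. apply Hz; auto.
    - apply (sweep_inZ c0 alpha beta rho mu s (zs i) (zs (S i))); [auto|apply IHi; lia|apply Hs; lia]. }
  intros i l Hi Hl. rewrite Hend. apply H; auto.
Qed.

Lemma limit_inZ c0 alpha beta rho mu s z zinf : wf_problem Pb -> inZ Pb z ->
  sweep_limit Pb c0 alpha beta rho mu s z zinf -> inZ Pb zinf.
Proof.
  intros Hwf Hz [zs [H0 [Hs Hc]]].
  assert (forall i, inZ Pb (zs i)).
  { induction i.
    - intros i' l Hi' Hl. rewrite H0. apply Hz; auto.
    - eapply sweep_inZ; eauto. }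
  intros i l Hi Hl. eapply cv_bounds. apply Hc.
  assert (off Pb (S i) <= off Pb (nP Pb))%nat by (apply off_mono; lia). rewrite off_S in H1.
  unfold nz. lia.
  intros n. apply H; auto.
Qed.
End Z.

Section Step.
Variable Pb : problem.

Lemma zin_transfer Fv Fv' w : (forall k, (k < nz Pb)%nat -> fst Fv k = fst Fv' k) ->
  (forall r, (r < mq Pb)%nat -> snd Fv r = snd Fv' r) ->
  zero_in_plus_N Pb Fv w -> zero_in_plus_N Pb Fv' w.
Proof. intros H1 H2 [v [Hv [Hv1 Hv2]]]. exists v. split; auto. split; intros.
  rewrite <- H1; auto. rewrite <- H2; auto. Qed.

Lemma H_bound rho lamH mut w d d' s s' : lamH_prop Pb rho lamH ->
  wnorm Pb (wsub (Hfun Pb rho mut w d s) (Hfun Pb rho mut w d' s'))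
    <= lamH * (vnorm (mq Pb) (vsub d d') + vnorm (np Pb) (vsub s s')).
Proof. intros [HlH Hb]. eapply Rle_trans. apply Hb. apply Rmult_le_compat_l. lra.
  apply sqrt_add_le; apply sqnorm_nonneg. Qed.

Lemma vnorm_self n x : vnorm n (vsub x x) = 0.
Proof. apply vnorm_zero; intros; unfold vsub; ring. Qed.

Lemma step_lemma c0 alpha beta rho M lamF lamH lamG rA dA lamA rB qB lamB dB Cc del psi
   (sig : nat -> vec) (wh : nat -> W) (zbar mubar : nat -> vec) (rw rs : R) (j : nat) wB :
  wf_problem Pb -> 0 < rho ->
  lamF_def Pb lamF -> lamH_prop Pb rho lamH -> lamG_prop Pb lamG ->
  Sset Pb (sig j) -> Sset Pb (sig (S j)) ->
  KKT Pb (wh j) (sig j) -> KKT Pb (wh (S j)) (sig (S j)) ->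
  inZ Pb (zbar j) -> inZ Pb (zbar (S j)) ->
  (forall r, mubar (S j) r = mubar j r + rho * Gval Pb (zbar (S j)) (sig (S j)) r) ->
  0 < rA -> 0 < dA -> 0 < lamA -> 0 < rB -> 0 < qB -> 0 < lamB -> dA <= dB ->
  0 < Cc -> 0 < Rpower (INR M) (- psi) ->
  HypA Pb sig wh j rA dA lamA ->
  HypB Pb rho sig wh j rB qB lamB dB wB ->
  HypC Pb c0 alpha beta rho M sig wh zbar mubar j rB qB wB Cc del psi ->
  rw < qB * rho ->
  del - (1 + lamH * lamB / rho) * rw > 0 ->
  lamH * lamB * rs < del - (1 + lamH * lamB / rho) * rw ->
  vnorm (np Pb) (vsub (sig (S j)) (sig j)) <= rs ->
  vnorm (np Pb) (vsub (sig (S j)) (sig j)) < rA ->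
  vnorm (np Pb) (vsub (sig (S j)) (sig j)) < rB ->
  lamA * lamF * vnorm (np Pb) (vsub (sig (S j)) (sig j)) < qB * rho ->
  wnorm Pb (wsub (zbar j, mubar j) (wh j)) < rw ->
  wnorm Pb (wsub (zbar (S j), mubar (S j)) (wh (S j)))
   <= beta_w Cc lamG lamB lamH psi rho M * wnorm Pb (wsub (zbar j, mubar j) (wh j))
      + beta_s Cc lamG lamB lamH lamA lamF psi rho M * vnorm (np Pb) (vsub (sig (S j)) (sig j)).
Proof.
  intros Hwf Hrho HlF HlH HlG Ss0 Ss1 K0 K1 Z0 Z1 Hmu HrA HdA HlA HrB HqB HlB HdAB HCc HRp
    [wA [HA1 [HA2 HA3]]] [HB1 HB2] [zinf [HC1 [HC2 HC3]]] Hrw Hdel Hdel2 Hds Hds1 Hds2 Hds3 Hej.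
  set (ds := vnorm (np Pb) (vsub (sig (S j)) (sig j))) in *.
  set (ej := wnorm Pb (wsub (zbar j, mubar j) (wh j))) in *.
  assert (Hds0 : 0 <= ds) by apply vnorm_nonneg.
  assert (Hej0 : 0 <= ej) by apply wnorm_nonneg.
  assert (HlH0 : 0 < lamH) by apply HlH.
  assert (HlG0 : 0 < lamG) by apply HlG.
  assert (HlF0 : 0 <= lamF).
  { destruct HlF as [L [_ ->]]. apply Rmult_le_pos. apply pos_INR. apply fmax_nonneg. }
  assert (Hb0 : sball Pb (sig j) rA (sig j)) by (unfold sball; rewrite vnorm_self; auto).
  assert (Hb1 : sball Pb (sig j) rA (sig (S j))) by (unfold sball; auto).
  assert (HbB0 : sball Pb (sig j) rB (sig j)) by (unfold sball; rewrite vnorm_self; auto).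
  assert (HbB1 : sball Pb (sig j) rB (sig (S j))) by (unfold sball; auto).
  destruct (HA1 _ Hb0 Ss0) as [HA0b [HA0K HA0u]].
  destruct (HA1 _ Hb1 Ss1) as [HA1b [HA1K HA1u]].
  assert (Wj : weq Pb (wh j) (wA (sig j))).
  { apply HA0u; auto. unfold wball. rewrite wnorm_self; auto. }
  assert (Wj1 : weq Pb (wh (S j)) (wA (sig (S j)))) by (apply HA3; auto).
  set (est := wnorm Pb (wsub (wh (S j)) (wh j))).
  assert (Hest : est <= lamA * lamF * ds).
  { unfold est. rewrite (weq_l _ _ _ _ Wj1), (weq_r _ _ _ _ Wj).
    eapply Rle_trans. apply HA2; auto.
    rewrite Rmult_assoc. apply Rmult_le_compat_l. lra.
    unfold wnorm, Ffun, wsub; simpl.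
    unfold sqnorm at 1. rewrite (fsum_zero (nz Pb)) by (intros; unfold vsub; ring). rewrite Rplus_0_l.
    fold (vnorm (mq Pb) (vsub (fun r => Gval Pb (fst (wA (sig j))) (sig (S j)) r)
                              (fun r => Gval Pb (fst (wA (sig j))) (sig j) r))).
    rewrite (vnorm_ext _ _ (fun r => Gaff Pb (sig (S j)) r - Gaff Pb (sig j) r)).
    apply Gaff_bound; auto. intros; unfold vsub, Gval; ring. }
  assert (Hest0 : wnorm Pb (wsub (wA (sig (S j))) (wh j)) < dA) by apply HA1b.
  set (dj := fun r => (mubar j r - snd (wh j) r) / rho).
  assert (Hdj : vnorm (mq Pb) dj <= ej / rho).
  { rewrite (vnorm_ext _ _ (fun r => / rho * vsub (mubar j) (snd (wh j)) r)).
    rewrite vnorm_scal, Rabs_right by (left; apply Rinv_0_lt_compat; lra).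
    unfold Rdiv. rewrite Rmult_comm. apply Rmult_le_compat_r. left; apply Rinv_0_lt_compat; lra.
    apply (wnorm_snd Pb (zbar j, mubar j) (wh j)).
    intros; unfold dj, vsub; field; lra. }
  assert (Hdjq : vnorm (mq Pb) dj < qB).
  { eapply Rle_lt_trans; [exact Hdj|]. apply Rmult_lt_reg_r with rho; auto.
    unfold Rdiv; rewrite Rmult_assoc, Rinv_l by lra. lra. }
  specialize (HC2 Hdjq Hds2). fold dj in HC2.
  set (winf := (zinf, fun r => mubar j r + rho * Gval Pb zinf (sig (S j)) r)) in *.
  set (d0 := fun _ : nat => 0).
  assert (Hd0 : vnorm (mq Pb) d0 < qB) by (rewrite vnorm_zero; auto).
  destruct (HB1 d0 (sig j) Hd0 HbB0 Ss0) as [_ [_ HB0u]].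
  assert (W0 : weq Pb (wh j) (wB d0 (sig j))).
  { apply HB0u. unfold wball; rewrite wnorm_self; lra.
    eapply zin_transfer; [| |exact K0]; intros; simpl; auto. unfold d0; field; lra. }
  set (dst := fun r => (snd (wh (S j)) r - snd (wh j) r) / rho).
  assert (Hdst : vnorm (mq Pb) dst <= est / rho).
  { rewrite (vnorm_ext _ _ (fun r => / rho * vsub (snd (wh (S j))) (snd (wh j)) r)).
    rewrite vnorm_scal, Rabs_right by (left; apply Rinv_0_lt_compat; lra).
    unfold Rdiv. rewrite Rmult_comm. apply Rmult_le_compat_r. left; apply Rinv_0_lt_compat; lra.
    apply wnorm_snd. intros; unfold dst, vsub; field; lra. }
  assert (Hdstq : vnorm (mq Pb) dst < qB).
  { eapply Rle_lt_trans; [exact Hdst|]. apply Rmult_lt_reg_r with rho; auto.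
    unfold Rdiv; rewrite Rmult_assoc, Rinv_l by lra. lra. }
  destruct (HB1 dst (sig (S j)) Hdstq HbB1 Ss1) as [_ [_ HB1u]].
  assert (W1 : weq Pb (wh (S j)) (wB dst (sig (S j)))).
  { apply HB1u. unfold wball. rewrite (weq_l _ _ _ _ Wj1). lra.
    eapply zin_transfer; [| |exact K1]; intros; simpl; auto. unfold dst; field; lra. }
  assert (P1 : wnorm Pb (wsub winf (wh j)) <= lamB * lamH * (vnorm (mq Pb) dj + ds)).
  { rewrite (weq_l _ _ _ _ HC2), (weq_r _ _ _ _ W0).
    eapply Rle_trans. apply HB2; auto. rewrite Rmult_assoc. apply Rmult_le_compat_l. lra.
    eapply Rle_trans. apply H_bound; eauto. right. f_equal. f_equal.
    apply vnorm_ext. intros; unfold vsub, d0; ring. }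
  assert (P2 : wnorm Pb (wsub winf (wh (S j))) <= lamB * lamH / rho * (ej + est)).
  { rewrite (weq_l _ _ _ _ HC2), (weq_r _ _ _ _ W1).
    eapply Rle_trans. apply HB2; auto. 
    eapply Rle_trans. apply Rmult_le_compat_l. lra. apply H_bound; eauto.
    rewrite vnorm_self, Rplus_0_r.
    rewrite (vnorm_ext _ _ (fun r => / rho * vsub (mubar j) (snd (wh (S j))) r)).
    2:{ intros; unfold dj, dst, vsub; field; lra. }
    rewrite vnorm_scal, Rabs_right by (left; apply Rinv_0_lt_compat; lra).
    assert (vnorm (mq Pb) (vsub (mubar j) (snd (wh (S j)))) <= ej + est).
    { eapply Rle_trans. apply (vnorm_tri _ _ (snd (wh j))). apply Rplus_le_compat.
      apply (wnorm_snd Pb (zbar j, mubar j) (wh j)).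
      unfold est. rewrite wnorm_sym. apply wnorm_snd. }
    assert (0 < / rho) by (apply Rinv_0_lt_compat; lra).
    apply Rle_trans with (lamB*lamH*/rho * vnorm (mq Pb) (vsub (mubar j) (snd (wh (S j))))); [right; ring|].
    unfold Rdiv. apply Rmult_le_compat_l; auto. apply Rmult_le_pos; [nra|lra]. }
  set (K := Cc * Rpower (INR M) (- psi)) in *.
  assert (HK : 0 <= K) by (unfold K; nra).
  set (X := vnorm (nz Pb) (vsub (zbar j) zinf)).
  assert (HX : X <= ej + lamB * lamH * (ej / rho + ds)).
  { unfold X. eapply Rle_trans. apply (vnorm_tri _ _ (fst (wh j))).
    apply Rplus_le_compat. apply (wnorm_fst Pb (zbar j, mubar j) (wh j)).
    rewrite vnorm_sym. eapply Rle_trans. apply (wnorm_fst Pb winf (wh j)).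
    eapply Rle_trans. exact P1. apply Rmult_le_compat_l. nra. lra. }
  assert (HXd : X < del).
  { eapply Rle_lt_trans. exact HX.
    assert (lamB * lamH * (ej / rho) <= lamH * lamB / rho * rw).
    { unfold Rdiv. assert (0 < / rho) by (apply Rinv_0_lt_compat; lra).
      apply Rle_trans with (lamH * lamB * / rho * ej); [right; ring|]. apply Rmult_le_compat_l; [|lra].
      apply Rmult_le_pos; [nra|lra]. }
    assert (lamB * lamH * ds <= lamH * lamB * rs) by (rewrite (Rmult_comm lamB); apply Rmult_le_compat_l; nra).
    lra. }
  specialize (HC3 HXd). fold X in HC3.
  assert (Zinf : inZ Pb zinf) by (apply (limit_inZ Pb c0 alpha beta rho (mubar j) (sig (S j)) (zbar j) zinf); auto).
  assert (Hmu1 : vnorm (mq Pb) (vsub (mubar (S j)) (snd winf)) <= rho * lamG * vnorm (nz Pb) (vsub (zbar (S j)) zinf)).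
  { rewrite (vnorm_ext _ _ (fun r => rho * vsub (fun r => Gval Pb (zbar (S j)) (sig (S j)) r) (fun r => Gval Pb zinf (sig (S j)) r) r)).
    rewrite vnorm_scal, Rabs_right by lra. rewrite Rmult_assoc. apply Rmult_le_compat_l. lra.
    apply HlG; auto.
    intros r _. unfold winf, vsub; simpl. rewrite Hmu. ring. }
  assert (Hnext : wnorm Pb (wsub (zbar (S j), mubar (S j)) winf) <= (1 + rho * lamG) * (K * X)).
  { pose proof (wnorm_split Pb (zbar (S j), mubar (S j)) winf) as Hs.
    change (fst (zbar (S j), mubar (S j))) with (zbar (S j)) in Hs.
    change (snd (zbar (S j), mubar (S j))) with (mubar (S j)) in Hs.
    change (fst winf) with zinf in Hs.
    pose proof (vnorm_nonneg (nz Pb) (vsub (zbar (S j)) zinf)).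
    assert (rho * lamG * vnorm (nz Pb) (vsub (zbar (S j)) zinf) <= rho * lamG * (K * X)).
    { apply Rmult_le_compat_l; [nra|auto]. }
    eapply Rle_trans; [exact Hs|]. rewrite Rmult_plus_distr_r, Rmult_1_l. apply Rplus_le_compat; [exact HC3|].
    eapply Rle_trans; [exact Hmu1|]. exact H0. }
  eapply Rle_trans. apply (wnorm_tri Pb _ winf).
  assert (H1 : (1 + rho * lamG) * (K * X) <= (1 + rho * lamG) * (K * (ej + lamB * lamH * (ej / rho + ds)))).
  { apply Rmult_le_compat_l; [nra|]. apply Rmult_le_compat_l; auto. }
  assert (H2 : lamB * lamH / rho * (ej + est) <= lamB * lamH / rho * (ej + lamA * lamF * ds)).
  { apply Rmult_le_compat_l; [|lra]. unfold Rdiv. apply Rmult_le_pos; [nra|]. left; apply Rinv_0_lt_compat; lra. }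
  unfold beta_w, beta_s. fold K.
  assert (E : (1 + rho * lamG) * (K * (ej + lamB * lamH * (ej / rho + ds))) + lamB * lamH / rho * (ej + lamA * lamF * ds)
     = (K * (1 + rho * lamG) * (1 + lamB * lamH / rho) + lamB * lamH / rho) * ej +
       (K * (1 + rho * lamG) * lamB * lamH + lamB * lamH * lamA * lamF / rho) * ds).
  { field. lra. }
  replace (Cc * (1 + rho * lamG) * (1 + lamB * lamH / rho) * Rpower (INR M) (- psi))
    with (K * (1 + rho * lamG) * (1 + lamB * lamH / rho)) by (unfold K; ring).
  replace (Cc * (1 + rho * lamG) * lamB * lamH * Rpower (INR M) (- psi))
    with (K * (1 + rho * lamG) * lamB * lamH) by (unfold K; ring).
  lra.
Qed.
End Step.

Lemma geo_S b n : fsum (S n) (fun i => b ^ i) = 1 + b * fsum n (fun i => b ^ i).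
Proof. induction n. simpl; ring. rewrite (fsum_S (S n)). rewrite IHn at 1. rewrite (fsum_S n). simpl; ring. Qed.

Theorem mainTheorem12
  (Pb : problem) (c0 alpha : nat -> R) (beta rho : R) (M : nat)
  (lamF lamH lamG : R)
  (rA dA lamA rB qB lamB dB Cc del psi : R)
  (s : nat -> vec) (k D : nat) (wst : nat -> W) (wh : nat -> W)
  (zbar mubar : nat -> vec) (rw rs : R) :
  wf_problem Pb ->
  (forall i, (i < nP Pb)%nat -> 0 < c0 i) ->
  (forall i, (i < nP Pb)%nat -> 0 < alpha i) ->
  1 < beta ->
  0 < rho -> (1 <= M)%nat ->
  lamF_def Pb lamF -> lamH_prop Pb rho lamH -> lamG_prop Pb lamG ->
  (2 <= D)%nat ->
  (forall j, (j <= D)%nat -> Sset Pb (shom s k D j)) ->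
  (forall j, (j <= D)%nat -> KKT Pb (wh j) (shom s k D j)) ->
  weq Pb (wh O) (wst k) -> weq Pb (wh D) (wst (S k)) ->
  inZ Pb (zbar O) ->
  (forall j, (j < D)%nat ->
     Msweeps Pb c0 alpha beta rho (mubar j) (shom s k D (S j)) M (zbar j) (zbar (S j)) /\
     (forall r, mubar (S j) r = mubar j r + rho * Gval Pb (zbar (S j)) (shom s k D (S j)) r)) ->
  0 < rA -> 0 < dA -> 0 < lamA -> 0 < rB -> 0 < qB -> 0 < lamB -> dA <= dB ->
  0 < Cc -> 0 < del -> 0 < psi ->
  (forall j, (j < D)%nat ->
     HypA Pb (shom s k D) wh j rA dA lamA /\
     exists wB, HypB Pb rho (shom s k D) wh j rB qB lamB dB wB /\
                HypC Pb c0 alpha beta rho M (shom s k D) wh zbar mubar j rB qB wB Cc del psi) ->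
  beta_w Cc lamG lamB lamH psi rho M < 1 ->
  beta_s Cc lamG lamB lamH lamA lamF psi rho M < 1 ->
  0 < rw -> 0 < rs ->
  rw < qB * rho ->
  del - (1 + lamH * lamB / rho) * rw > 0 ->
  rs < (1 - beta_w Cc lamG lamB lamH psi rho M) * rw / beta_s Cc lamG lamB lamH lamA lamF psi rho M ->
  lamH * lamB * rs < del - (1 + lamH * lamB / rho) * rw ->
  wnorm Pb (wsub (zbar O, mubar O) (wst k)) < rw ->
  vnorm (np Pb) (vsub (s (S k)) (s k)) <= rs ->
  vnorm (np Pb) (vsub (s (S k)) (s k)) < rA ->
  vnorm (np Pb) (vsub (s (S k)) (s k)) < rB ->
  lamA * lamF * vnorm (np Pb) (vsub (s (S k)) (s k)) < qB * rho ->
  wnorm Pb (wsub (zbar D, mubar D) (wst (S k)))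
    <= beta_w Cc lamG lamB lamH psi rho M ^ D * wnorm Pb (wsub (zbar O, mubar O) (wst k))
       + beta_s Cc lamG lamB lamH lamA lamF psi rho M
         * (fsum D (fun i => beta_w Cc lamG lamB lamH psi rho M ^ i) / INR D)
         * vnorm (np Pb) (vsub (s (S k)) (s k)).
Proof.
  intros Hwf Hc0 Hal Hbeta Hrho HM HlF HlH HlG HD HS HK Wk Wk1 Z0 Hsw HrA HdA HlA HrB HqB HlB HdAB
    HCc Hdel0 Hpsi Hyp Hbw1 Hbs1 Hrw0 Hrs0 Hrw Hdel Hrs Hdel2 He0 HDrs HDrA HDrB HDq.
  set (sig := shom s k D) in *.
  set (Dl := vnorm (np Pb) (vsub (s (S k)) (s k))) in *.
  set (bw := beta_w Cc lamG lamB lamH psi rho M) in *.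
  set (bs := beta_s Cc lamG lamB lamH lamA lamF psi rho M) in *.
  assert (HDpos : 2 <= INR D) by (replace 2 with (INR 2) by (simpl; ring); apply le_INR; auto).
  assert (HRp : 0 < Rpower (INR M) (- psi)) by (unfold Rpower; apply exp_pos).
  assert (HlH0 : 0 < lamH) by apply HlH.
  assert (HlG0 : 0 < lamG) by apply HlG.
  assert (HlF0 : 0 <= lamF).
  { destruct HlF as [L [_ ->]]. apply Rmult_le_pos. apply pos_INR. apply fmax_nonneg. }
  assert (Hq : 0 < lamB * lamH / rho) by (unfold Rdiv; apply Rmult_lt_0_compat; [nra|apply Rinv_0_lt_compat; lra]).
  assert (Hbw0 : 0 <= bw).
  { unfold bw, beta_w. assert (0 <= Cc * (1 + rho * lamG) * (1 + lamB * lamH / rho) * Rpower (INR M) (- psi)).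
    { repeat apply Rmult_le_pos; nra. } lra. }
  assert (Hbs0 : 0 < bs).
  { unfold bs, beta_s. assert (0 < Cc * (1 + rho * lamG) * lamB * lamH * Rpower (INR M) (- psi)).
    { repeat apply Rmult_lt_0_compat; nra. }
    assert (0 <= lamB * lamH * lamA * lamF / rho).
    { unfold Rdiv. apply Rmult_le_pos. repeat apply Rmult_le_pos; nra. left; apply Rinv_0_lt_compat; lra. }
    lra. }
  assert (Hrsbs : bs * rs < (1 - bw) * rw).
  { apply Rmult_lt_compat_l with (r := bs) in Hrs; auto.
    unfold Rdiv in Hrs. rewrite (Rmult_comm ((1 - bw) * rw)), <- Rmult_assoc, Rinv_r in Hrs by lra. lra. }
  assert (Hds : forall j, vnorm (np Pb) (vsub (sig (S j)) (sig j)) = Dl / INR D).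
  { intros j. rewrite (vnorm_ext _ _ (fun c => / INR D * vsub (s (S k)) (s k) c)).
    rewrite vnorm_scal, Rabs_right by (left; apply Rinv_0_lt_compat; lra). unfold Dl, Rdiv. ring.
    intros c _. unfold sig, shom, vsub. rewrite S_INR. field. lra. }
  assert (HDl0 : 0 <= Dl) by apply vnorm_nonneg.
  assert (HdsDl : Dl / INR D <= Dl).
  { unfold Rdiv. apply Rle_trans with (Dl * 1); [|lra]. apply Rmult_le_compat_l; auto.
    rewrite <- Rinv_1. apply Rinv_le_contravar; lra. }
  set (e := fun j => wnorm Pb (wsub (zbar j, mubar j) (wh j))).
  assert (E0 : e O = wnorm Pb (wsub (zbar O, mubar O) (wst k))) by (unfold e; apply weq_r; auto).
  assert (Main : forall j, (j <= D)%nat -> inZ Pb (zbar j) /\ e j < rw /\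
            e j <= bw ^ j * e O + bs * (Dl / INR D) * fsum j (fun i => bw ^ i)).
  { induction j; intros Hj.
    - split; auto. split. rewrite E0; auto. simpl. lra.
    - destruct IHj as [Zj [Hej Hbnd]]; [lia|].
      destruct (Hsw j ltac:(lia)) as [Hms Hmu].
      destruct (Hyp j ltac:(lia)) as [HA [wB [HB HC]]].
      assert (Zj1 : inZ Pb (zbar (S j))) by (eapply Msweeps_inZ; eauto).
      assert (Hst := step_lemma Pb c0 alpha beta rho M lamF lamH lamG rA dA lamA rB qB lamB dB Cc del psi
        sig wh zbar mubar rw rs j wB Hwf Hrho HlF HlH HlG
        (HS j ltac:(lia)) (HS (S j) Hj) (HK j ltac:(lia)) (HK (S j) Hj) Zj Zj1 Hmu
        HrA HdA HlA HrB HqB HlB HdAB HCc HRp HA HB HC Hrw Hdel Hdel2).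
      rewrite Hds in Hst. fold bw bs in Hst.
      specialize (Hst ltac:(lra) ltac:(lra) ltac:(lra)).
      assert (lamA * lamF * (Dl / INR D) <= lamA * lamF * Dl) by (apply Rmult_le_compat_l; nra).
      specialize (Hst ltac:(lra) Hej). fold (e j) (e (S j)) in Hst.
      split; auto. split.
      + assert (bw * e j <= bw * rw) by (apply Rmult_le_compat_l; lra).
        assert (bs * (Dl / INR D) <= bs * rs) by (apply Rmult_le_compat_l; lra).
        lra.
      + eapply Rle_trans; [exact Hst|]. rewrite geo_S. simpl pow.
        assert (bw * e j <= bw * (bw ^ j * e O + bs * (Dl / INR D) * fsum j (fun i => bw ^ i)))
          by (apply Rmult_le_compat_l; auto).
        lra. }
  destruct (Main D (le_n D)) as [_ [_ HeD]].
  unfold e in HeD. rewrite (weq_r _ _ _ _ Wk1) in HeD. rewrite <- E0.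
  eapply Rle_trans; [exact HeD|]. unfold e. apply Req_le. unfold Rdiv. ring.
Qed.
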